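(* Let $\Gamma$ be a green Veldkamp quadrangle with point set $P$ and let $a,b\in P$. Then (i) $a\simeq b$ if and only if $a^{\rm op}=b^{\rm op}$; (ii) if $a\simeq b$, then $\Gamma_2(a)=\Gamma_2(b)$. In particular $\simeq$ is an equivalence relation on $P$.
   Context: A graph is a pair $(V,E)$ with $E$ a set of $2$-element subsets of $V$; $\Gamma_v$ is the set of neighbors of $v$; $\Gamma_m(v)=\{u\mid{\rm dist}(u,v)=m\}$. An $s$-path is a sequence $(x_0,\dots,x_s)$ of vertices with consecutive vertices adjacent and $x_{i-2}\ne x_i$ for $i\in[2,s]$. A closed $s$-path is an $s$-path with $s\ge3$ whose first and last vertices coincide; an $s$-circuit is the subgraph determined by a closed $s$-path. An opposition relation on a set $X$ is a symmetric anti-reflexive relation; trivial if any two distinct elements are related; $k$-plump if for every $S\subseteq X$ with $|S|\le k$ some element of $X$ is related to all elements of $S$. A Veldkamp graph is a graph with a $2$-plump opposition relation $\equiv_v$ on $\Gamma_v$ for each vertex $v$. A path $(v_0,\dots,v_s)$ is straight if $v_{i-1}\equiv_{v_i}v_{i+1}$ for all $i\in[1,s-1]$; a circuit is straight if every path in it is straight. A Veldkamp $n$-gon ($n\ge2$) is a Veldkamp graph satisfying (VP1) connected and bipartite; (VP2) for each $k\in[1,n-1]$ each straight $k$-path is the unique straight path between its endpoints of length at most $k$; (VP3) every straight $(n+1)$-path lies in a straight $2n$-circuit. A root is a straight $n$-path; two vertices are opposite if there is a root between them; $x^{\rm op}$ is the set of vertices opposite $x$. A Veldkamp quadrangle is a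 Veldkamp $4$-gon, with bipartition classes called points $P$ and lines $L$; it is green if $\equiv_x$ is trivial for every line $x$. A weed is a non-straight $4$-path $(a,x,b,y,c)$ with $a,b,c\in P$ and ${\rm dist}(a,c)=4$. For $a,b\in P$, write $a\simeq b$ if $a=b$ or there is a weed beginning at $a$ and ending at $b$. *)

(* Defs.v *)
From Stdlib Require Import List Arith Relations.
Import ListNotations.

Set Implicit Arguments.

(* A graph (V, E): E a set of 2-subsets = symmetric irreflexive adjacency. *)
Definition is_graph (V : Type) (adj : V -> V -> Prop) : Prop :=
  (forall x y, adj x y -> adj y x) /\ (forall x, ~ adj x x).

(* A sequence (x_0, x_1, ..., x_s) is represented by its head x_0 and tail
   [x_1; ...; x_s]; s = length of the tail, last vertex = last tail x_0. *)
Fixpoint chain (V : Type) (R : V -> V -> Prop) (x : V) (l : list V) : Prop :=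
  match l with
  | [] => True
  | y :: l' => R x y /\ chain R y l'
  end.

Fixpoint nobacktrack (V : Type) (x : V) (l : list V) : Prop :=
  match l with
  | y :: ((z :: _) as l') => x <> z /\ nobacktrack y l'
  | _ => True
  end.

Definition is_path (V : Type) (adj : V -> V -> Prop) (x : V) (l : list V) : Prop :=
  chain adj x l /\ nobacktrack x l.

(* straightness: v_{i-1} ≡_{v_i} v_{i+1} for i in [1, s-1];
   opp v is the opposition relation on Γ_v *)
Fixpoint straight (V : Type) (opp : V -> V -> V -> Prop) (x : V) (l : list V) : Prop :=
  match l with
  | y :: ((z :: _) as l') => opp y x z /\ straight opp y l'
  | _ => True
  end.

Definition dist_eq (V : Type) (adj : V -> V -> Prop) (u v : V) (m : nat) : Prop :=
  (exists l, chain adj u l /\ last l u = v /\ length l = m) /\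
  (forall l, chain adj u l -> last l u = v -> m <= length l).

Definition Gamma_m (V : Type) (adj : V -> V -> Prop) (m : nat) (v u : V) : Prop :=
  dist_eq adj u v m.

Definition opposition_on (V : Type) (adj : V -> V -> Prop) (opp : V -> V -> V -> Prop) (v : V) : Prop :=
  (forall u w, opp v u w -> adj v u /\ adj v w) /\
  (forall u w, opp v u w -> opp v w u) /\
  (forall u, ~ opp v u u).

Definition plump (V : Type) (adj : V -> V -> Prop) (opp : V -> V -> V -> Prop) (k : nat) (v : V) : Prop :=
  forall S : list V, (forall x, In x S -> adj v x) -> length S <= k ->
    exists z, adj v z /\ forall x, In x S -> opp v z x.

Definition veldkamp_graph (V : Type) (adj : V -> V -> Prop) (opp : V -> V -> V -> Prop) : Prop :=
  is_graph adj /\ forall v, opposition_on adj opp v /\ plump adj opp 2 v.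

Definition connected (V : Type) (adj : V -> V -> Prop) : Prop :=
  forall u v, clos_refl_trans V adj u v.

Definition bipartition_class (V : Type) (adj : V -> V -> Prop) (pt : V -> Prop) : Prop :=
  forall x y, adj x y -> (pt x <-> ~ pt y).

Definition bipartite (V : Type) (adj : V -> V -> Prop) : Prop :=
  exists pt : V -> Prop, bipartition_class adj pt.

Definition closed_path (V : Type) (adj : V -> V -> Prop) (s : nat) (x : V) (l : list V) : Prop :=
  is_path adj x l /\ length l = s /\ 3 <= s /\ last l x = x.

(* edges / vertices of the subgraph (circuit) determined by the sequence x::l *)
Definition circ_edge (V : Type) (x : V) (l : list V) (u w : V) : Prop :=
  In (u, w) (combine (x :: l) l) \/ In (w, u) (combine (x :: l) l).

Definition circ_vertex (V : Type) (x : V) (l : list V) (u : V) : Prop := In u (x :: l).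

Definition path_in_circuit (V : Type) (x : V) (l : list V) (y : V) (m : list V) : Prop :=
  circ_vertex x l y /\ chain (circ_edge x l) y m.

Definition straight_circuit (V : Type) (opp : V -> V -> V -> Prop) (x : V) (l : list V) : Prop :=
  forall y m, path_in_circuit x l y m -> nobacktrack y m -> straight opp y m.

Definition VP2 (V : Type) (adj : V -> V -> Prop) (opp : V -> V -> V -> Prop) (n : nat) : Prop :=
  forall k, 1 <= k <= n - 1 ->
  forall x l, is_path adj x l -> length l = k -> straight opp x l ->
  forall l', is_path adj x l' -> straight opp x l' -> length l' <= k ->
    last l' x = last l x -> l' = l.

Definition VP3 (V : Type) (adj : V -> V -> Prop) (opp : V -> V -> V -> Prop) (n : nat) : Prop :=
  forall x l, is_path adj x l -> length l = n + 1 -> straight opp x l ->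
  exists c cl, closed_path adj (2 * n) c cl /\ straight_circuit opp c cl /\
    path_in_circuit c cl x l.

Definition veldkamp_ngon (V : Type) (adj : V -> V -> Prop) (opp : V -> V -> V -> Prop) (n : nat) : Prop :=
  2 <= n /\ veldkamp_graph adj opp /\ connected adj /\ bipartite adj /\
  VP2 adj opp n /\ VP3 adj opp n.

(* Veldkamp quadrangle with chosen bipartition class of points pt (lines = ~ pt) *)
Definition veldkamp_quadrangle (V : Type) (adj : V -> V -> Prop) (opp : V -> V -> V -> Prop)
  (pt : V -> Prop) : Prop :=
  veldkamp_ngon adj opp 4 /\ bipartition_class adj pt.

Definition green (V : Type) (adj : V -> V -> Prop) (opp : V -> V -> V -> Prop) (pt : V -> Prop) : Prop :=
  forall x, ~ pt x -> forall u w, adj x u -> adj x w -> u <> w -> opp x u w.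

Definition opposite (V : Type) (adj : V -> V -> Prop) (opp : V -> V -> V -> Prop) (n : nat) (x y : V) : Prop :=
  exists l, is_path adj x l /\ length l = n /\ straight opp x l /\ last l x = y.

Definition weed (V : Type) (adj : V -> V -> Prop) (opp : V -> V -> V -> Prop) (pt : V -> Prop)
  (a x b y c : V) : Prop :=
  is_path adj a [x; b; y; c] /\ ~ straight opp a [x; b; y; c] /\
  pt a /\ pt b /\ pt c /\ dist_eq adj a c 4.

Definition simeq (V : Type) (adj : V -> V -> Prop) (opp : V -> V -> V -> Prop) (pt : V -> Prop)
  (a b : V) : Prop :=
  a = b \/ exists x m y, weed adj opp pt a x m y b.

(* Main.v *)
Require Import Defs.
From Stdlib Require Import List Arith Relations Lia Classical.
Import ListNotations.



Lemma L_sym {V adj opp pt} (HQ : @veldkamp_quadrangle V adj opp pt) : forall x y, adj x y -> adj y x.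
Proof. destruct HQ as [[_ [[[Hs _] _] _]] _]. exact Hs. Qed.
Lemma L_irr {V adj opp pt} (HQ : @veldkamp_quadrangle V adj opp pt) : forall x, ~ adj x x.
Proof. destruct HQ as [[_ [[[_ Hs] _] _]] _]. exact Hs. Qed.
Lemma L_oppadj {V adj opp pt} (HQ : @veldkamp_quadrangle V adj opp pt) : forall v u w, opp v u w -> adj v u /\ adj v w.
Proof. destruct HQ as [[_ [[_ H] _]] _]. intros v; apply (H v). Qed.
Lemma L_oppsym {V adj opp pt} (HQ : @veldkamp_quadrangle V adj opp pt) : forall v u w, opp v u w -> opp v w u.
Proof. destruct HQ as [[_ [[_ H] _]] _]. intros v; apply (H v). Qed.
Lemma L_oppirr {V adj opp pt} (HQ : @veldkamp_quadrangle V adj opp pt) : forall v u, ~ opp v u u.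
Proof. destruct HQ as [[_ [[_ H] _]] _]. intros v; apply (H v). Qed.
Lemma L_plump {V adj opp pt} (HQ : @veldkamp_quadrangle V adj opp pt) : forall v, plump adj opp 2 v.
Proof. destruct HQ as [[_ [[_ H] _]] _]. intros v; apply (H v). Qed.
Lemma L_VP2 {V adj opp pt} (HQ : @veldkamp_quadrangle V adj opp pt) : VP2 adj opp 4.
Proof. destruct HQ as [[_ [_ [_ [_ [H _]]]]] _]. exact H. Qed.
Lemma L_VP3 {V adj opp pt} (HQ : @veldkamp_quadrangle V adj opp pt) : VP3 adj opp 4.
Proof. destruct HQ as [[_ [_ [_ [_ [_ H]]]]] _]. exact H. Qed.
Lemma L_bip {V adj opp pt} (HQ : @veldkamp_quadrangle V adj opp pt) : forall x y, adj x y -> (pt x <-> ~ pt y).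
Proof. destruct HQ as [_ H]. exact H. Qed.

Lemma plump0 {V adj opp pt} (HQ : @veldkamp_quadrangle V adj opp pt) v : exists z, adj v z.
Proof. destruct (L_plump HQ v []) as [z [Hz _]]; simpl; auto; try lia; try tauto. eauto. Qed.
Lemma plump1 {V adj opp pt} (HQ : @veldkamp_quadrangle V adj opp pt) v x : adj v x -> exists z, adj v z /\ opp v z x.
Proof. intros H. assert (A: forall y, In y [x] -> adj v y) by (intros y [<-|[]]; auto).
 destruct (L_plump HQ v [x] A) as [z [Hz Hz2]]; simpl; auto.
 exists z; split; auto. apply Hz2; simpl; auto. Qed.
Lemma plump2' {V adj opp pt} (HQ : @veldkamp_quadrangle V adj opp pt) v x y : adj v x -> adj v y -> exists z, adj v z /\ opp v z x /\ opp v z y.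
Proof. intros H H'. assert (A: forall u, In u [x;y] -> adj v u) by (intros u [<-|[<-|[]]]; auto).
 destruct (L_plump HQ v [x;y] A) as [z [Hz Hz2]]; simpl; auto.
 exists z; repeat split; auto; apply Hz2; simpl; auto. Qed.

Definition SP {V} (adj : V -> V -> Prop) (opp : V -> V -> V -> Prop) a x p y z :=
  adj a x /\ adj x p /\ adj p y /\ adj y z /\ a <> p /\ p <> z /\ opp p x y.

Lemma SP_rev {V adj opp pt} (HQ : @veldkamp_quadrangle V adj opp pt) a x p y z :
  SP adj opp a x p y z -> SP adj opp z y p x a.
Proof. pose proof (L_sym HQ). pose proof (L_oppsym HQ). unfold SP; intuition. Qed.

Lemma SP_op {V adj opp pt} (HQ : @veldkamp_quadrangle V adj opp pt) (Hg : green adj opp pt) a x p y z :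
  pt a -> SP adj opp a x p y z -> opposite adj opp 4 a z.
Proof. intros Ha [H1 [H2 [H3 [H4 [H5 [H6 H7]]]]]].
 pose proof (L_sym HQ) as Hs. pose proof (L_bip HQ) as Hb.
 assert (~ pt x) by (apply (Hb a x); auto).
 assert (pt p) by (destruct (Hb x p H2); tauto).
 assert (~ pt y) by (apply (Hb p y); auto).
 exists [x;p;y;z]. simpl. repeat split; auto.
 all: try (intros ->; apply (L_oppirr HQ p y); auto; fail).
 all: try (apply Hg; auto).
Qed.

Lemma op_SP {V adj opp pt} (HQ : @veldkamp_quadrangle V adj opp pt) a z :
  opposite adj opp 4 a z -> exists x p y, SP adj opp a x p y z.
Proof. intros [l [[Hc Hn] [Hl [Hs Hlast]]]].
 destruct l as [|x [|p [|y [|z' [|]]]]]; simpl in Hl; try lia.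
 simpl in *. subst z'. exists x, p, y. unfold SP; intuition. Qed.


Lemma PL {V adj opp pt} (HQ : @veldkamp_quadrangle V adj opp pt) (Hg : green adj opp pt) p q x y :
  pt p -> p <> q -> adj p x -> adj x q -> adj p y -> adj y q -> x = y.
Proof. intros Hp Hpq H1 H2 H3 H4.
 pose proof (L_sym HQ) as Hs. pose proof (L_bip HQ) as Hb.
 assert (~ pt x) by (apply (Hb p x); auto).
 assert (~ pt y) by (apply (Hb p y); auto).
 assert (E : [y;q] = [x;q]).
 { apply (L_VP2 HQ 2 ltac:(lia) p [x;q]).
   - split; simpl; auto.
   - reflexivity.
   - simpl; split; [apply Hg; auto | auto].
   - split; simpl; auto.
   - simpl; split; [apply Hg; auto | auto].
   - simpl; lia.
   - reflexivity. }
 injection E; auto.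
Qed.

Definition f8 {V} (l : list V) (d : V) (i : nat) : V := nth (i mod 8) l d.

Lemma mod8_cases i : i mod 8 = 0 \/ i mod 8 = 1 \/ i mod 8 = 2 \/ i mod 8 = 3 \/
  i mod 8 = 4 \/ i mod 8 = 5 \/ i mod 8 = 6 \/ i mod 8 = 7.
Proof. pose proof (Nat.mod_upper_bound i 8). lia. Qed.

Ltac modfacts := repeat match goal with
 | |- context [?x mod 8] => let H := fresh in assert (H := Nat.div_mod_eq x 8); pose proof (Nat.mod_upper_bound x 8 ltac:(lia)); generalize dependent (x mod 8); generalize dependent (x/8); intros
 | H: context [?x mod 8] |- _ => let H' := fresh in assert (H' := Nat.div_mod_eq x 8); pose proof (Nat.mod_upper_bound x 8 ltac:(lia)); revert H; generalize dependent (x mod 8); generalize dependent (x/8); intros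
 end.

Ltac inlist := repeat (first [ left; reflexivity | right ]).
Ltac ce := unfold circ_edge; simpl; solve [left; inlist | right; inlist].

Ltac par pt a b := let E := fresh in intro E; assert (pt a <-> pt b) by (rewrite E; tauto); tauto.

Lemma cyc_inj {V adj opp pt} (HQ : @veldkamp_quadrangle V adj opp pt) c v1 v2 v3 v4 v5 v6 v7 :
  is_path adj c [v1;v2;v3;v4;v5;v6;v7;c] ->
  straight_circuit opp c [v1;v2;v3;v4;v5;v6;v7;c] ->
  forall i j, f8 [c;v1;v2;v3;v4;v5;v6;v7] c i = f8 [c;v1;v2;v3;v4;v5;v6;v7] c j -> i mod 8 = j mod 8.
Proof. intros [Hch Hnb] Hsc.
 pose proof (L_sym HQ) as Hs. pose proof (L_bip HQ) as Hb.
 simpl in Hch, Hnb.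
 destruct Hch as [A1 [A2 [A3 [A4 [A5 [A6 [A7 [A8 _]]]]]]]].
 destruct Hnb as [N0 [N1 [N2 [N3 [N4 [N5 [N6 _]]]]]]].
 pose proof (Hb _ _ A1) as B1. pose proof (Hb _ _ A2) as B2. pose proof (Hb _ _ A3) as B3.
 pose proof (Hb _ _ A4) as B4. pose proof (Hb _ _ A5) as B5. pose proof (Hb _ _ A6) as B6.
 pose proof (Hb _ _ A7) as B7. pose proof (Hb _ _ A8) as B8.
 assert (D01 : c <> v1) by par pt c v1. assert (D03 : c <> v3) by par pt c v3.
 assert (D05 : c <> v5) by par pt c v5. assert (D07 : c <> v7) by par pt c v7.
 assert (D12 : v1 <> v2) by par pt v1 v2. assert (D14 : v1 <> v4) by par pt v1 v4.
 assert (D16 : v1 <> v6) by par pt v1 v6. assert (D23 : v2 <> v3) by par pt v2 v3.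
 assert (D25 : v2 <> v5) by par pt v2 v5. assert (D27 : v2 <> v7) by par pt v2 v7.
 assert (D34 : v3 <> v4) by par pt v3 v4. assert (D36 : v3 <> v6) by par pt v3 v6.
 assert (D45 : v4 <> v5) by par pt v4 v5. assert (D47 : v4 <> v7) by par pt v4 v7.
 assert (D56 : v5 <> v6) by par pt v5 v6. assert (D67 : v6 <> v7) by par pt v6 v7.
 clear B1 B2 B3 B4 B5 B6 B7 B8.
 assert (SC : forall y m, chain (circ_edge c [v1;v2;v3;v4;v5;v6;v7;c]) y m ->
     In y [c;v1;v2;v3;v4;v5;v6;v7;c] -> nobacktrack y m -> straight opp y m)
   by (intros y m H1 H2 H3; apply Hsc; [split; auto | auto]).
 assert (K2 : forall x l l', is_path adj x l -> length l = 2 -> straight opp x l ->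
     is_path adj x l' -> straight opp x l' -> length l' <= 2 -> last l' x = last l x -> l' = l)
   by (intros x l l' ? ? ? ? ? ? ?; apply (L_VP2 HQ 2 ltac:(lia) x l); auto).
 assert (K3 : forall x l l', is_path adj x l -> length l = 3 -> straight opp x l ->
     is_path adj x l' -> straight opp x l' -> length l' <= 3 -> last l' x = last l x -> l' = l)
   by (intros x l l' ? ? ? ? ? ? ?; apply (L_VP2 HQ 3 ltac:(lia) x l); auto).
 assert (D04 : c <> v4).
 { intro E. assert (EE : [v3; v4] = [v1; c]).
   { apply (K2 v2); [ split; simpl; repeat split; auto; congruence | reflexivity | apply SC; simpl; [repeat split; ce | inlist | repeat split; congruence]
               | split; simpl; repeat split; auto; congruence | apply SC; simpl; [repeat split; ce | inlist | repeat split; congruence] | simpl; lia | simpl; congruence ]. }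
   injection EE; intros; congruence. }
 assert (D15 : v1 <> v5).
 { intro E. assert (EE : [v4; v5] = [v2; v1]).
   { apply (K2 v3); [ split; simpl; repeat split; auto; congruence | reflexivity | apply SC; simpl; [repeat split; ce | inlist | repeat split; congruence]
               | split; simpl; repeat split; auto; congruence | apply SC; simpl; [repeat split; ce | inlist | repeat split; congruence] | simpl; lia | simpl; congruence ]. }
   injection EE; intros; congruence. }
 assert (D26 : v2 <> v6).
 { intro E. assert (EE : [v5; v6] = [v3; v2]).
   { apply (K2 v4); [ split; simpl; repeat split; auto; congruence | reflexivity | apply SC; simpl; [repeat split; ce | inlist | repeat split; congruence]
               | split; simpl; repeat split; auto; congruence | apply SC; simpl; [repeat split; ce | inlist | repeat split; congruence] | simpl; lia | simpl; congruence ]. }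
   injection EE; intros; congruence. }
 assert (D37 : v3 <> v7).
 { intro E. assert (EE : [v6; v7] = [v4; v3]).
   { apply (K2 v5); [ split; simpl; repeat split; auto; congruence | reflexivity | apply SC; simpl; [repeat split; ce | inlist | repeat split; congruence]
               | split; simpl; repeat split; auto; congruence | apply SC; simpl; [repeat split; ce | inlist | repeat split; congruence] | simpl; lia | simpl; congruence ]. }
   injection EE; intros; congruence. }
 assert (D17 : v1 <> v7).
 { intro E. assert (EE : [v5; v6; v7] = [v3; v2; v1]).
   { apply (K3 v4); [ split; simpl; repeat split; auto; congruence | reflexivity | apply SC; simpl; [repeat split; ce | inlist | repeat split; congruence]
               | split; simpl; repeat split; auto; congruence | apply SC; simpl; [repeat split; ce | inlist | repeat split; congruence] | simpl; lia | simpl; congruence ]. }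
   injection EE; intros; congruence. }
 clear SC K2 K3.
 intros i j. unfold f8.
 destruct (mod8_cases i) as [Hi|[Hi|[Hi|[Hi|[Hi|[Hi|[Hi|Hi]]]]]]]; rewrite Hi;
 destruct (mod8_cases j) as [Hj|[Hj|[Hj|[Hj|[Hj|[Hj|[Hj|Hj]]]]]]]; rewrite Hj; simpl; intro E;
 first [reflexivity | exfalso; congruence].
Qed.




Lemma cyc_ext {V adj opp pt} (HQ : @veldkamp_quadrangle V adj opp pt) c cl :
  closed_path adj 8 c cl -> straight_circuit opp c cl ->
  forall z M p L a N, path_in_circuit c cl z [M;p;L;a;N] -> nobacktrack z [M;p;L;a;N] ->
  exists q K, is_path adj a [N;q;K;z] /\ straight opp a [N;q;K;z].
Proof.
 intros [Hp [Hlen [_ Hlast]]] Hsc.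
 destruct cl as [|v1 [|v2 [|v3 [|v4 [|v5 [|v6 [|v7 [|v8 [|]]]]]]]]]; simpl in Hlen; try lia.
 simpl in Hlast. subst v8.
 pose proof (cyc_inj HQ _ _ _ _ _ _ _ _ Hp Hsc) as Finj.
 set (F := f8 [c;v1;v2;v3;v4;v5;v6;v7] c) in *.
 pose proof (L_sym HQ) as Hs.
 assert (Fmod : forall i j, i mod 8 = j mod 8 -> F i = F j) by (intros i j E; unfold F, f8; rewrite E; auto).
 destruct Hp as [Hch Hnb]. simpl in Hch.
 destruct Hch as [A1 [A2 [A3 [A4 [A5 [A6 [A7 [A8 _]]]]]]]].
 assert (Fedge : forall k, circ_edge c [v1;v2;v3;v4;v5;v6;v7;c] (F k) (F (k+1))).
 { intro k. unfold F, f8. rewrite (Nat.Div0.add_mod k 1 8).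
   destruct (mod8_cases k) as [Hi|[Hi|[Hi|[Hi|[Hi|[Hi|[Hi|Hi]]]]]]]; rewrite Hi; simpl; ce. }
 assert (Fadj : forall k, adj (F k) (F (k+1))).
 { intro k. unfold F, f8. rewrite (Nat.Div0.add_mod k 1 8).
   destruct (mod8_cases k) as [Hi|[Hi|[Hi|[Hi|[Hi|[Hi|[Hi|Hi]]]]]]]; rewrite Hi; simpl; auto. }
 assert (Fvert : forall k, circ_vertex c [v1;v2;v3;v4;v5;v6;v7;c] (F k)).
 { intro k. unfold circ_vertex, F, f8.
   destruct (mod8_cases k) as [Hi|[Hi|[Hi|[Hi|[Hi|[Hi|[Hi|Hi]]]]]]]; rewrite Hi; simpl; inlist. }
 assert (Fvert2 : forall u, circ_vertex c [v1;v2;v3;v4;v5;v6;v7;c] u -> exists j, u = F j).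
 { intros u H. unfold circ_vertex in H. simpl in H.
   repeat destruct H as [H|H]; try contradiction; subst u;
   first [exists 0; reflexivity | exists 1; reflexivity | exists 2; reflexivity | exists 3; reflexivity
         | exists 4; reflexivity | exists 5; reflexivity | exists 6; reflexivity | exists 7; reflexivity]. }
 assert (Fcase : forall u w, circ_edge c [v1;v2;v3;v4;v5;v6;v7;c] u w ->
    exists j, (u = F j /\ w = F (j+1)) \/ (w = F j /\ u = F (j+1))).
 { intros u w H. unfold circ_edge in H. simpl in H.
   destruct H as [H|H]; repeat destruct H as [H|H]; try contradiction; injection H as <- <-;
   first [ exists 0; left; split; reflexivity | exists 0; right; split; reflexivity
         | exists 1; left; split; reflexivity | exists 1; right; split; reflexivity
         | exists 2; left; split; reflexivity | exists 2; right; split; reflexivity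
         | exists 3; left; split; reflexivity | exists 3; right; split; reflexivity
         | exists 4; left; split; reflexivity | exists 4; right; split; reflexivity
         | exists 5; left; split; reflexivity | exists 5; right; split; reflexivity
         | exists 6; left; split; reflexivity | exists 6; right; split; reflexivity
         | exists 7; left; split; reflexivity | exists 7; right; split; reflexivity ]. }
 assert (Cadj : forall u w, circ_edge c [v1;v2;v3;v4;v5;v6;v7;c] u w -> adj u w).
 { intros u w H. destruct (Fcase u w H) as [j [[-> ->]|[-> ->]]]; auto. }
 assert (Hfirst : forall k u, circ_edge c [v1;v2;v3;v4;v5;v6;v7;c] (F k) u -> u = F (k+1) \/ u = F (k+7)).
 { intros k u H. destruct (Fcase _ _ H) as [j [[E1 E2]|[E1 E2]]].
   - left. rewrite E2. apply Fmod. apply Finj in E1. modfacts. lia.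
   - right. rewrite E1. apply Fmod. apply Finj in E2. modfacts. lia. }
 assert (Hnext : forall k e u, (e = 1 \/ e = 7) -> circ_edge c [v1;v2;v3;v4;v5;v6;v7;c] (F (k+e)) u ->
     u <> F k -> u = F (k+e+e)).
 { intros k e u He H Hu. destruct (Hfirst _ _ H) as [E|E]; rewrite E in *;
   destruct He as [He|He]; subst e.
   - reflexivity.
   - exfalso; apply Hu; apply Fmod; modfacts; lia.
   - exfalso; apply Hu; apply Fmod; modfacts; lia.
   - apply Fmod; modfacts; lia. }
 assert (Hedge : forall k e, (e = 1 \/ e = 7) -> circ_edge c [v1;v2;v3;v4;v5;v6;v7;c] (F k) (F (k+e))).
 { intros k e [->| ->]. - apply Fedge.
   - assert (E : F k = F (k+7+1)) by (apply Fmod; modfacts; lia).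
     rewrite E. unfold circ_edge. specialize (Fedge (k+7)). unfold circ_edge in Fedge. tauto. }
 intros z M p L a N [Hz Hpath] Hnb2.
 simpl in Hpath, Hnb2.
 destruct Hpath as [C1 [C2 [C3 [C4 [C5 _]]]]].
 destruct Hnb2 as [B1 [B2 [B3 [B4 _]]]].
 destruct (Fvert2 z Hz) as [i0 ->].
 assert (He : exists e, (e = 1 \/ e = 7) /\ M = F (i0 + e)).
 { destruct (Hfirst _ _ C1) as [E|E]; [exists 1|exists 7]; auto. }
 destruct He as [e [He ->]].
 pose proof (Hnext i0 e p He C2 (not_eq_sym B1)) as Ep. subst p.
 assert (EL : L = F (i0 + e + e + e)).
 { apply (Hnext (i0+e) e L He C3). intro E; apply B2; congruence. }
 subst L.
 assert (Ea : a = F (i0 + e + e + e + e)).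
 { apply (Hnext (i0+e+e) e a He C4). intro E; apply B3; congruence. }
 subst a.
 assert (EN : N = F (i0 + e + e + e + e + e)).
 { apply (Hnext (i0+e+e+e) e N He C5). intro E; apply B4; congruence. }
 subst N.
 set (k4 := i0+e+e+e+e).
 assert (Ez : F i0 = F (k4+e+e+e+e)) by (apply Fmod; unfold k4; destruct He; subst e; modfacts; lia).
 exists (F (k4+e+e)), (F (k4+e+e+e)).
 assert (NB : nobacktrack (F k4) [F (k4+e); F (k4+e+e); F (k4+e+e+e); F i0]).
 { rewrite Ez. simpl. repeat split; intro E; apply Finj in E; destruct He; subst e; modfacts; lia. }
 assert (CH : chain (circ_edge c [v1;v2;v3;v4;v5;v6;v7;c]) (F k4) [F (k4+e); F (k4+e+e); F (k4+e+e+e); F i0]).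
 { rewrite Ez. simpl. repeat split; apply Hedge; auto. }
 split.
 - split; auto. clear NB. simpl in CH |- *. intuition.
 - apply Hsc; auto. split; auto.
Qed.


Arguments SP_rev {V adj opp pt} HQ {a x p y z}.

Lemma SP_pt {V adj opp pt} (HQ : @veldkamp_quadrangle V adj opp pt) a x p y z :
  pt a -> SP adj opp a x p y z -> ~ pt x /\ pt p /\ ~ pt y /\ pt z.
Proof. intros Ha [H1 [H2 [H3 [H4 _]]]]. pose proof (L_bip HQ) as Hb.
 pose proof (Hb _ _ H1). pose proof (Hb _ _ H2). pose proof (Hb _ _ H3). pose proof (Hb _ _ H4). tauto. Qed.
Arguments SP_pt {V adj opp pt} HQ {a x p y z}.

Lemma R0 {V adj opp pt} (HQ : @veldkamp_quadrangle V adj opp pt) (Hg : green adj opp pt) a L p M z N :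
  pt a -> SP adj opp a L p M z -> opp a L N -> exists q K, SP adj opp a N q K z.
Proof. intros Ha HS HO.
 pose proof (SP_pt HQ Ha HS) as [PL [Pp [PM Pz]]].
 destruct HS as [H1 [H2 [H3 [H4 [H5 [H6 H7]]]]]].
 pose proof (L_sym HQ) as Hs.
 destruct (L_oppadj HQ _ _ _ HO) as [_ HN].
 assert (HP : is_path adj z [M;p;L;a;N]).
 { split; simpl; repeat split; auto.
   all: try congruence.
   all: intro E; subst; eapply (L_oppirr HQ); eauto. }
 assert (HSt : straight opp z [M;p;L;a;N]).
 { simpl; repeat split; auto.
   all: first [apply Hg; auto; congruence | apply (L_oppsym HQ); auto]. }
 destruct (L_VP3 HQ z [M;p;L;a;N] HP eq_refl HSt) as [c [cl [Hcl [Hsc Hpic]]]].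
 destruct (cyc_ext HQ c cl Hcl Hsc z M p L a N Hpic (proj2 HP)) as [q [K [[Ch Nb] St]]].
 exists q, K. simpl in Ch, Nb, St. unfold SP; intuition.
Qed.

Lemma LR {V adj opp pt} (HQ : @veldkamp_quadrangle V adj opp pt) (Hg : green adj opp pt) a L p M z N :
  pt a -> SP adj opp a L p M z -> adj a N -> exists q K, SP adj opp a N q K z.
Proof. intros Ha HS HN.
 assert (HL : adj a L) by (destruct HS; auto).
 destruct (plump2' HQ a L N HL HN) as [N' [H1 [H2 H3]]].
 destruct (R0 HQ Hg a L p M z N' Ha HS (L_oppsym HQ _ _ _ H2)) as [q [K HS']].
 exact (R0 HQ Hg a N' q K z N Ha HS' H3).
Qed.

Lemma T5a {V adj opp pt} (HQ : @veldkamp_quadrangle V adj opp pt) (Hg : green adj opp pt) a x p y :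
  pt a -> SP adj opp a x p y a -> False.
Proof. intros Ha HS. pose proof (SP_pt HQ Ha HS) as [_ [Pp _]].
 destruct HS as [H1 [H2 [H3 [H4 [H5 [H6 H7]]]]]]. pose proof (L_sym HQ) as Hs.
 assert (x = y) by (apply (PL HQ Hg p a); auto).
 subst; apply (L_oppirr HQ p y); auto. Qed.

Definition col {V} (adj : V -> V -> Prop) a c := exists X, adj a X /\ adj X c.

Lemma T5b {V adj opp pt} (HQ : @veldkamp_quadrangle V adj opp pt) (Hg : green adj opp pt) a L p M z X :
  pt a -> SP adj opp a L p M z -> adj a X -> adj X z -> False.
Proof. intros Ha HS HX1 HX2. pose proof (SP_pt HQ Ha HS) as [_ [_ [_ Pz]]].
 pose proof (L_sym HQ) as Hs.
 destruct (LR HQ Hg z M p L a X Pz (SP_rev HQ HS) (Hs _ _ HX2)) as [q [K HS2]].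
 pose proof (SP_pt HQ Pz HS2) as [_ [Pq _]].
 destruct HS2 as [H1 [H2 [H3 [H4 [H5 [H6 H7]]]]]].
 assert (X = K) by (apply (PL HQ Hg q a); auto).
 subst; apply (L_oppirr HQ q K); auto. Qed.

Definition W {V} (adj : V -> V -> Prop) (opp : V -> V -> V -> Prop) (pt : V -> Prop) a x b y c :=
  pt a /\ adj a x /\ adj x b /\ adj b y /\ adj y c /\ a <> b /\ b <> c /\ a <> c /\ ~ opp b x y /\ ~ col adj a c.

Lemma W_pt {V adj opp pt} (HQ : @veldkamp_quadrangle V adj opp pt) a x b y c :
  W adj opp pt a x b y c -> pt b /\ pt c.
Proof. intros [Ha [H1 [H2 [H3 [H4 _]]]]]. pose proof (L_bip HQ) as Hb.
 pose proof (Hb _ _ H1). pose proof (Hb _ _ H2). pose proof (Hb _ _ H3). pose proof (Hb _ _ H4). tauto. Qed.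
Arguments W_pt {V adj opp pt} HQ {a x b y c}.

Lemma NotOpp {V adj opp pt} (HQ : @veldkamp_quadrangle V adj opp pt) (Hg : green adj opp pt) a x b y c L p M :
  W adj opp pt a x b y c -> SP adj opp a L p M c -> False.
Proof. intros HW HS. pose proof (W_pt HQ HW) as [Pb Pc].
 destruct HW as [Ha [H1 [H2 [H3 [H4 [H5 [H6 [H7 [H8 H9]]]]]]]]].
 pose proof (L_sym HQ) as Hs.
 destruct (LR HQ Hg a L p M c x Ha HS H1) as [q [K HS2]].
 destruct (classic (q = b)) as [->|Hqb].
 - destruct HS2 as [G1 [G2 [G3 [G4 [G5 [G6 G7]]]]]].
   assert (K = y) by (apply (PL HQ Hg b c); auto). subst. tauto.
 - destruct HS2 as [G1 [G2 [G3 [G4 [G5 [G6 G7]]]]]].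
   apply (T5b HQ Hg b x q K c y Pb); auto. unfold SP; auto 10.
Qed.

Lemma LemW {V adj opp pt} (HQ : @veldkamp_quadrangle V adj opp pt) (Hg : green adj opp pt) a x b y c N d :
  W adj opp pt a x b y c -> opp a N x -> adj N d -> d <> a -> exists Y, W adj opp pt a N d Y c.
Proof. intros HW HO HNd Hda. pose proof (W_pt HQ HW) as [Pb Pc].
 pose proof HW as HW'.
 destruct HW as [Ha [H1 [H2 [H3 [H4 [H5 [H6 [H7 [H8 H9]]]]]]]]].
 pose proof (L_sym HQ) as Hs.
 destruct (L_oppadj HQ _ _ _ HO) as [HaN _].
 assert (S1 : SP adj opp b x a N d) by (unfold SP; repeat split; auto; first [congruence | apply (L_oppsym HQ); auto]).
 destruct (LR HQ Hg b x a N d y Pb S1 H3) as [q [K S2]].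
 pose proof (SP_pt HQ Pb S2) as [_ [_ [_ Pd]]].
 destruct (classic (q = c)) as [->|Hqc].
 - exists K. destruct S2 as [G1 [G2 [G3 [G4 [G5 [G6 G7]]]]]].
   assert (Hdc : d <> c) by (intro E; subst; apply H9; exists N; auto).
   unfold W; repeat split; auto.
   intro E. apply (NotOpp HQ Hg a x b y c N d K HW'). unfold SP; repeat split; auto.
 - destruct S2 as [G1 [G2 [G3 [G4 [G5 [G6 G7]]]]]].
   assert (S3 : SP adj opp d K q y c) by (unfold SP; repeat split; auto; first [congruence | apply (L_oppsym HQ); auto]).
   destruct (LR HQ Hg d K q y c N Pd S3 (Hs _ _ HNd)) as [r [N' S4]].
   destruct S4 as [F1 [F2 [F3 [F4 [F5 [F6 F7]]]]]].
   destruct (classic (r = a)) as [->|Hra].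
   + exfalso; apply H9; exists N'; auto.
   + exfalso. apply (NotOpp HQ Hg a x b y c N r N' HW'). unfold SP; repeat split; auto.
Qed.


Ltac fin HQ := first [assumption | congruence | apply (L_oppsym HQ); assumption | auto].

Lemma StepS {V adj opp pt} (HQ : @veldkamp_quadrangle V adj opp pt) (Hg : green adj opp pt) a x b y c q K z :
  W adj opp pt a x b y c -> SP adj opp a x q K z -> q <> b -> exists L p M, SP adj opp c L p M z.
Proof. intros HW HS Hqb. pose proof (W_pt HQ HW) as [Pb Pc].
 pose proof HW as HW'.
 destruct HW as [Ha [H1 [H2 [H3 [H4 [H5 [H6 [H7 [H8 H9]]]]]]]]].
 pose proof (L_sym HQ) as Hs.
 pose proof (SP_pt HQ Ha HS) as [_ [_ [_ Pz]]].
 pose proof HS as HS0.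
 destruct HS as [G1 [G2 [G3 [G4 [G5 [G6 G7]]]]]].
 assert (S1 : SP adj opp b x q K z) by (unfold SP; repeat split; auto; fin HQ).
 destruct (LR HQ Hg b x q K z y Pb S1 H3) as [q' [K' S2]].
 destruct (classic (c = q')) as [<-|Hcq].
 - exfalso. destruct S2 as [F1 [F2 [F3 [F4 [F5 [F6 F7]]]]]].
   destruct (LR HQ Hg z K q x a K' Pz (SP_rev HQ HS0) (Hs _ _ F4)) as [r [N' S3]].
   destruct S3 as [E1 [E2 [E3 [E4 [E5 [E6 E7]]]]]].
   destruct (classic (r = c)) as [->|Hrc].
   + apply H9. exists N'; auto.
   + apply (NotOpp HQ Hg a x b y c N' r K' HW'). unfold SP; repeat split; auto; fin HQ.
 - destruct S2 as [F1 [F2 [F3 [F4 [F5 [F6 F7]]]]]].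
   exists y, q', K'. unfold SP; repeat split; auto.
Qed.

Definition opS {V} (adj : V -> V -> Prop) opp a z := exists L p M, @SP V adj opp a L p M z.

Lemma Main1 {V adj opp pt} (HQ : @veldkamp_quadrangle V adj opp pt) (Hg : green adj opp pt) a x b y c z :
  W adj opp pt a x b y c -> opS adj opp a z -> opS adj opp c z.
Proof. intros HW [L [p [M HS]]]. pose proof HW as HW'.
 destruct HW as [Ha [H1 _]].
 pose proof (L_sym HQ) as Hs.
 destruct (plump1 HQ a x H1) as [N [HaN HO]].
 destruct (LR HQ Hg a L p M z N Ha HS HaN) as [q [K HS2]].
 assert (HNq : adj N q) by (destruct HS2 as [_ [X _]]; exact X).
 destruct (plump2' HQ N a q (Hs _ _ HaN) HNq) as [d [HNd [Od Oq]]].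
 assert (da : d <> a) by (intro E; subst; apply (L_oppirr HQ N a); auto).
 assert (dq : q <> d) by (intro E; subst; apply (L_oppirr HQ N d); auto).
 destruct (LemW HQ Hg a x b y c N d HW' HO HNd da) as [Y HW2].
 exact (StepS HQ Hg a N d Y c q K z HW2 HS2 dq).
Qed.

Lemma W_rev {V adj opp pt} (HQ : @veldkamp_quadrangle V adj opp pt) a x b y c :
  W adj opp pt a x b y c -> W adj opp pt c y b x a.
Proof. intros HW. pose proof (W_pt HQ HW) as [Pb Pc].
 destruct HW as [Ha [H1 [H2 [H3 [H4 [H5 [H6 [H7 [H8 H9]]]]]]]]].
 pose proof (L_sym HQ) as Hs.
 unfold W; repeat split; auto; try congruence.
 - intro E; apply H8; apply (L_oppsym HQ); auto.
 - intros [X [X1 X2]]; apply H9; exists X; auto.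
Qed.

Lemma dist4 {V adj opp pt} (HQ : @veldkamp_quadrangle V adj opp pt) a c :
  pt a -> pt c -> a <> c -> ~ col adj a c -> forall l, chain adj a l -> last l a = c -> 4 <= length l.
Proof. intros Ha Hc Hac Hcol l Hch Hl. pose proof (L_bip HQ) as Hb.
 destruct l as [|u1 [|u2 [|u3 l]]]; simpl in *.
 - congruence.
 - subst. destruct Hch as [X _]. pose proof (Hb _ _ X). tauto.
 - subst. exfalso; apply Hcol. exists u1; tauto.
 - destruct l.
   + subst. destruct Hch as [X1 [X2 [X3 _]]].
     pose proof (Hb _ _ X1). pose proof (Hb _ _ X2). pose proof (Hb _ _ X3). tauto.
   + simpl; lia.
Qed.

Lemma weed_W {V adj opp pt} (HQ : @veldkamp_quadrangle V adj opp pt) (Hg : green adj opp pt) a x b y c :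
  weed adj opp pt a x b y c -> W adj opp pt a x b y c.
Proof. intros [[Hch Hnb] [Hns [Ha [Pb [Pc [_ Hmin]]]]]].
 simpl in Hch, Hnb. pose proof (L_bip HQ) as Hb. pose proof (L_sym HQ) as Hs.
 destruct Hch as [H1 [H2 [H3 [H4 _]]]].
 destruct Hnb as [N1 [N2 [N3 _]]].
 unfold W; repeat split; auto.
 - intro E. specialize (Hmin [] I). simpl in Hmin. assert (4 <= 0) by (apply Hmin; congruence). lia.
 - intro E. apply Hns. simpl. repeat split; auto.
   + apply Hg; auto. apply (Hb a x); auto.
   + apply Hg; auto. pose proof (Hb _ _ H3). tauto.
 - intros [X [X1 X2]]. specialize (Hmin [X; c]). simpl in Hmin.
   assert (4 <= 2) by (apply Hmin; auto). lia.
Qed.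

Lemma W_weed {V adj opp pt} (HQ : @veldkamp_quadrangle V adj opp pt) a x b y c :
  W adj opp pt a x b y c -> weed adj opp pt a x b y c.
Proof. intros HW. pose proof (W_pt HQ HW) as [Pb Pc].
 destruct HW as [Ha [H1 [H2 [H3 [H4 [H5 [H6 [H7 [H8 H9]]]]]]]]].
 pose proof (L_sym HQ) as Hs.
 split; [|split; [|split; [|split; [|split]]]]; auto.
 - split; simpl; repeat split; auto.
   intro E; subst; apply H9; exists y; auto.
 - simpl. intros [_ [E _]]. tauto.
 - split.
   + exists [x;b;y;c]. simpl; repeat split; auto.
   + apply (dist4 HQ); auto.
Qed.

Lemma G2_fwd {V adj opp pt} (HQ : @veldkamp_quadrangle V adj opp pt) z a :
  dist_eq adj z a 2 -> z <> a /\ col adj z a.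
Proof. intros [[l [Hch [Hl Hlen]]] Hmin]. split.
 - intro E. specialize (Hmin [] I). simpl in Hmin. assert (2 <= 0) by (apply Hmin; congruence). lia.
 - destruct l as [|u1 [|u2 [|]]]; simpl in *; try lia. subst. exists u1; tauto.
Qed.

Lemma G2_bwd {V adj opp pt} (HQ : @veldkamp_quadrangle V adj opp pt) z a :
  pt a -> z <> a -> col adj z a -> dist_eq adj z a 2.
Proof. intros Ha Hza [X [X1 X2]]. pose proof (L_bip HQ) as Hb. split.
 - exists [X; a]. simpl; auto.
 - intros l Hch Hl. destruct l as [|u1 [|u2 l]]; simpl in *.
   + congruence.
   + subst. destruct Hch as [Y _]. pose proof (Hb _ _ X1). pose proof (Hb _ _ X2). pose proof (Hb _ _ Y). tauto.
   + lia.
Qed.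

Lemma Main2 {V adj opp pt} (HQ : @veldkamp_quadrangle V adj opp pt) (Hg : green adj opp pt) a x b y c z :
  W adj opp pt a x b y c -> dist_eq adj z a 2 -> dist_eq adj z c 2.
Proof. intros HW HD. pose proof (W_pt HQ HW) as [Pb Pc]. pose proof HW as HW'.
 destruct HW as [Ha [H1 _]].
 pose proof (L_sym HQ) as Hs.
 destruct (G2_fwd HQ z a HD) as [Hza [Y [Y1 Y2]]].
 destruct (plump2' HQ a x Y H1 (Hs _ _ Y2)) as [N' [HN' [O1 O2]]].
 destruct (plump1 HQ N' a (Hs _ _ HN')) as [d [Hd Od]].
 assert (da : d <> a) by (intro E; subst; apply (L_oppirr HQ N' a); auto).
 destruct (LemW HQ Hg a x b y c N' d HW' O1 Hd da) as [Y1' HW2].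
 destruct (LemW HQ Hg a N' d Y1' c Y z HW2 (L_oppsym HQ _ _ _ O2) (Hs _ _ Y1) Hza) as [Y3 HW3].
 destruct HW3 as [_ [_ [_ [Z1 [Z2 [_ [Z3 _]]]]]]].
 apply (G2_bwd HQ); auto. exists Y3; auto.
Qed.


Lemma Back {V adj opp pt} (HQ : @veldkamp_quadrangle V adj opp pt) (Hg : green adj opp pt) a b :
  pt a -> pt b -> (forall z, opposite adj opp 4 a z <-> opposite adj opp 4 b z) -> simeq adj opp pt a b.
Proof. intros Ha Hb Hop. pose proof (L_sym HQ) as Hs.
 destruct (classic (a = b)) as [E|Hab]; [left; exact E|right].
 destruct (plump0 HQ a) as [L HL].
 destruct (plump1 HQ L a (Hs _ _ HL)) as [p [Hp Op]].
 assert (pa : p <> a) by (intro E; subst; apply (L_oppirr HQ L a); auto).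
 destruct (plump1 HQ p L (Hs _ _ Hp)) as [M [HM OM]].
 destruct (plump1 HQ M p (Hs _ _ HM)) as [z [Hz Oz]].
 assert (zp : z <> p) by (intro E; subst; apply (L_oppirr HQ M p); auto).
 assert (S1 : SP adj opp a L p M z) by (unfold SP; repeat split; auto; fin HQ).
 assert (NC : ~ col adj a b).
 { intros [X [X1 X2]].
   destruct (plump1 HQ b X (Hs _ _ X2)) as [M' [HM' OM']].
   destruct (plump1 HQ M' b (Hs _ _ HM')) as [w [Hw Ow]].
   assert (wb : w <> b) by (intro E; subst; apply (L_oppirr HQ M' b); auto).
   assert (S2 : SP adj opp a X b M' w) by (unfold SP; repeat split; auto; fin HQ).
   pose proof (proj1 (Hop _) (SP_op HQ Hg _ _ _ _ _ Ha S2)) as O2.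
   destruct (op_SP HQ _ _ O2) as [x' [p' [y' S3]]].
   apply (T5b HQ Hg b x' p' y' w M' Hb S3); auto. }
 pose proof (proj1 (Hop _) (SP_op HQ Hg _ _ _ _ _ Ha S1)) as O1.
 destruct (op_SP HQ _ _ O1) as [L2 [p2 [M2 S2]]].
 pose proof (SP_pt HQ Ha S1) as [_ [Pp [_ Pz]]].
 destruct (LR HQ Hg z M2 p2 L2 b M Pz (SP_rev HQ S2) (Hs _ _ Hz)) as [r [N S3]].
 pose proof S3 as S3'.
 destruct S3 as [E1 [E2 [E3 [E4 [E5 [E6 E7]]]]]].
 destruct (classic (r = p)) as [->|Hrp].
 - exists L, p, N. apply (W_weed HQ).
   assert (pb : p <> b) by (intro E; subst; apply NC; exists L; auto).
   unfold W; repeat split; auto.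
   + intro O. assert (S4 : SP adj opp a L p N b) by (unfold SP; repeat split; auto).
     pose proof (proj1 (Hop _) (SP_op HQ Hg _ _ _ _ _ Ha S4)) as O4.
     destruct (op_SP HQ _ _ O4) as [x' [p' [y' S5]]].
     exact (T5a HQ Hg b x' p' y' Hb S5).
 - exfalso.
   assert (S4 : SP adj opp p M r N b) by (unfold SP; repeat split; auto).
   pose proof (proj2 (Hop _) (SP_op HQ Hg _ _ _ _ _ Hb (SP_rev HQ S4))) as O4.
   destruct (op_SP HQ _ _ O4) as [x' [p' [y' S5]]].
   apply (T5b HQ Hg a x' p' y' p L Ha S5); auto.
Qed.

Lemma Fwd {V adj opp pt} (HQ : @veldkamp_quadrangle V adj opp pt) (Hg : green adj opp pt) a b :
  pt a -> pt b -> simeq adj opp pt a b -> (forall z, opposite adj opp 4 a z <-> opposite adj opp 4 b z).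
Proof. intros Ha Hb [<-|[x [m [y Hw]]]] z; [tauto|].
 apply (weed_W HQ Hg) in Hw. pose proof (W_rev HQ _ _ _ _ _ Hw) as Hw'.
 split; intro O.
 - destruct (op_SP HQ _ _ O) as [L [p [M S]]].
   destruct (Main1 HQ Hg _ _ _ _ _ z Hw (ex_intro _ L (ex_intro _ p (ex_intro _ M S)))) as [L' [p' [M' S']]].
   exact (SP_op HQ Hg _ _ _ _ _ Hb S').
 - destruct (op_SP HQ _ _ O) as [L [p [M S]]].
   destruct (Main1 HQ Hg _ _ _ _ _ z Hw' (ex_intro _ L (ex_intro _ p (ex_intro _ M S)))) as [L' [p' [M' S']]].
   exact (SP_op HQ Hg _ _ _ _ _ Ha S').
Qed.

Theorem proposition4p6 (V : Type) (adj : V -> V -> Prop) (opp : V -> V -> V -> Prop)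
  (pt : V -> Prop)
  (HQ : veldkamp_quadrangle adj opp pt) (Hgreen : green adj opp pt) :
  (forall a b, pt a -> pt b ->
     (simeq adj opp pt a b <-> (forall z, opposite adj opp 4 a z <-> opposite adj opp 4 b z)) /\
     (simeq adj opp pt a b -> forall z, Gamma_m adj 2 a z <-> Gamma_m adj 2 b z)) /\
  (forall a, pt a -> simeq adj opp pt a a) /\
  (forall a b, pt a -> pt b -> simeq adj opp pt a b -> simeq adj opp pt b a) /\
  (forall a b c, pt a -> pt b -> pt c ->
     simeq adj opp pt a b -> simeq adj opp pt b c -> simeq adj opp pt a c).
Proof.
 split; [|split; [|split]].
 - intros a b Ha Hb. split.
   + split; [apply (Fwd HQ Hgreen); auto | apply (Back HQ Hgreen); auto].
   + intros [<-|[x [m [y Hw]]]] z; [tauto|].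
     apply (weed_W HQ Hgreen) in Hw. pose proof (W_rev HQ _ _ _ _ _ Hw) as Hw'.
     unfold Gamma_m. split; intro D.
     * exact (Main2 HQ Hgreen _ _ _ _ _ z Hw D).
     * exact (Main2 HQ Hgreen _ _ _ _ _ z Hw' D).
 - intros a _; left; reflexivity.
 - intros a b Ha Hb H. apply (Back HQ Hgreen); auto.
   intro z. pose proof (Fwd HQ Hgreen a b Ha Hb H z). tauto.
 - intros a b c Ha Hb Hc H1 H2. apply (Back HQ Hgreen); auto.
   intro z. pose proof (Fwd HQ Hgreen a b Ha Hb H1 z). pose proof (Fwd HQ Hgreen b c Hb Hc H2 z). tauto.
Qed.
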